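(* Let $(S,+,\cdot)$ be a left inverse semi-brace and let $r_S$ be the map associated to $S$. Suppose that for all $a,b,c\in S$: (1) $(a+b)(a+b)^{-1}(a+bc)=a+bc$; (2) $\lambda_a(b)^{-1}+\lambda_{\rho_b(a)}(c)=\lambda_a(b)^{-1}+\lambda_{(a^{-1}+b)^{-1}}\lambda_b(c)$; (3) $\rho_b(a)^{-1}+c=(b^{-1}+c)\left(\rho_{\lambda_b(c)}(a)^{-1}+\rho_c(b)\right)$. Then $r_S$ is a solution of the Yang–Baxter equation.
   Context: An inverse semigroup is a semigroup $(S,\cdot)$ in which for each $a$ there is a unique $a^{-1}$ with $aa^{-1}a=a$ and $a^{-1}aa^{-1}=a^{-1}$. A left inverse semi-brace is a triple $(S,+,\cdot)$ where $(S,+)$ is a semigroup (not necessarily commutative), $(S,\cdot)$ is an inverse semigroup, and $a(b+c)=ab+a(a^{-1}+c)$ for all $a,b,c\in S$. For such $S$ set $\lambda_a(b)=a(a^{-1}+b)$ and $\rho_b(a)=(a^{-1}+b)^{-1}b$, and the map associated to $S$ is $r_S:S\times S\to S\times S$, $r_S(a,b)=(\lambda_a(b),\rho_b(a))$. A map $r:S\times S\to S\times S$ is a solution of the Yang–Baxter equation if $(r\times \mathrm{id}_S)(\mathrm{id}_S\times r)(r\times\mathrm{id}_S)=(\mathrm{id}_S\times r)(r\times\mathrm{id}_S)(\mathrm{id}_S\times r)$. *)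

(* Defs.v *)
Definition associative {S : Type} (op : S -> S -> S) : Prop :=
  forall a b c, op a (op b c) = op (op a b) c.

(* We carry the inverse as a
   function inv together with the existence and uniqueness axioms. *)
Definition is_inverse_semigroup {S : Type} (mul : S -> S -> S) (inv : S -> S) : Prop :=
  associative mul /\
  (forall a, mul (mul a (inv a)) a = a /\ mul (mul (inv a) a) (inv a) = inv a) /\
  (forall a b, mul (mul a b) a = a -> mul (mul b a) b = b -> b = inv a).

Definition is_left_inverse_semi_brace {S : Type}
  (add mul : S -> S -> S) (inv : S -> S) : Prop :=
  associative add /\ is_inverse_semigroup mul inv /\
  (forall a b c, mul a (add b c) = add (mul a b) (mul a (add (inv a) c))).

Definition lam {S : Type} (add mul : S -> S -> S) (inv : S -> S) (a b : S) : S :=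
  mul a (add (inv a) b).

Definition rho {S : Type} (add mul : S -> S -> S) (inv : S -> S) (b a : S) : S :=
  mul (inv (add (inv a) b)) b.

Definition r_S {S : Type} (add mul : S -> S -> S) (inv : S -> S) (p : S * S) : S * S :=
  (lam add mul inv (fst p) (snd p), rho add mul inv (snd p) (fst p)).

Definition r12 {S : Type} (r : S * S -> S * S) (t : S * S * S) : S * S * S :=
  let '(x, y, z) := t in let '(u, v) := r (x, y) in (u, v, z).
Definition r23 {S : Type} (r : S * S -> S * S) (t : S * S * S) : S * S * S :=
  let '(x, y, z) := t in let '(u, v) := r (y, z) in (x, u, v).

Definition is_YBE_solution {S : Type} (r : S * S -> S * S) : Prop :=
  forall t : S * S * S, r12 r (r23 r (r12 r t)) = r23 r (r12 r (r23 r t)).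

(* Main.v *)
Require Import Defs.
From Stdlib Require Import Setoid.

Theorem theorem12 (S : Type) (add mul : S -> S -> S) (inv : S -> S)
  (HS : is_left_inverse_semi_brace add mul inv)
  (H1 : forall a b c : S,
      mul (mul (add a b) (inv (add a b))) (add a (mul b c)) = add a (mul b c))
  (H2 : forall a b c : S,
      add (inv (lam add mul inv a b)) (lam add mul inv (rho add mul inv b a) c)
      = add (inv (lam add mul inv a b))
            (lam add mul inv (inv (add (inv a) b)) (lam add mul inv b c)))
  (H3 : forall a b c : S,
      add (inv (rho add mul inv b a)) c
      = mul (add (inv b) c)
            (add (inv (rho add mul inv (lam add mul inv b c) a)) (rho add mul inv c b))) :
  is_YBE_solution (r_S add mul inv).
Proof.
  destruct HS as [Aadd [[Am [Hinv Huniq]] Hd]].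
  assert (invinv : forall a, inv (inv a) = a).
  { intro a. symmetry. apply Huniq; [apply Hinv | apply Hinv]. }
  assert (invid : forall e, mul e e = e -> inv e = e).
  { intros e He. symmetry. apply Huniq; rewrite !He; reflexivity. }
  assert (Hidem : forall a b, mul a a = a -> mul b b = b ->
                  mul (mul a b) (mul a b) = mul a b).
  { intros a b Ha Hb.
    assert (Ha' : forall r, mul a (mul a r) = mul a r)
      by (intro r; rewrite Am, Ha; reflexivity).
    assert (Hb' : forall r, mul b (mul b r) = mul b r)
      by (intro r; rewrite Am, Hb; reflexivity).
    remember (inv (mul a b)) as x eqn:Hxdef.
    pose proof (proj1 (Hinv (mul a b))) as Hx1.
    pose proof (proj2 (Hinv (mul a b))) as Hx2.
    rewrite <- Hxdef in Hx1, Hx2.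
    repeat rewrite <- Am in Hx1.
    assert (Hx2r : forall r, mul x (mul a (mul b (mul x r))) = mul x r).
    { intro r. transitivity (mul (mul (mul x (mul a b)) x) r).
      - repeat rewrite <- Am; reflexivity.
      - rewrite Hx2; reflexivity. }
    assert (C : mul (mul b x) a = x).
    { rewrite Hxdef at 2. apply Huniq.
      - repeat rewrite <- Am. rewrite Hb', Ha'. exact Hx1.
      - repeat rewrite <- Am. rewrite Ha', Hb', Hx2r. reflexivity. }
    assert (Hxx : mul x x = x).
    { rewrite <- C. repeat rewrite <- Am. rewrite Hx2r. reflexivity. }
    pose proof (invid x Hxx) as Hix.
    rewrite Hxdef, invinv in Hix.
    rewrite Hix. rewrite <- Hxdef. exact Hxx. }
  assert (idcomm : forall e f, mul e e = e -> mul f f = f -> mul e f = mul f e).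
  { intros e f He Hf.
    assert (He' : forall r, mul e (mul e r) = mul e r)
      by (intro r; rewrite Am, He; reflexivity).
    assert (Hf' : forall r, mul f (mul f r) = mul f r)
      by (intro r; rewrite Am, Hf; reflexivity).
    pose proof (Hidem e f He Hf) as Hef.
    pose proof (Hidem f e Hf He) as Hfe.
    assert (E : mul f e = inv (mul e f)).
    { apply Huniq.
      - repeat rewrite <- Am. rewrite Hf', He'. repeat rewrite <- Am in Hef. exact Hef.
      - repeat rewrite <- Am. rewrite He', Hf'. repeat rewrite <- Am in Hfe. exact Hfe. }
    rewrite E, invid; [reflexivity | exact Hef]. }
  assert (idl : forall a, mul (mul a (inv a)) (mul a (inv a)) = mul a (inv a)).
  { intro a. rewrite Am. rewrite (proj1 (Hinv a)). reflexivity. }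
  assert (idr : forall a, mul (mul (inv a) a) (mul (inv a) a) = mul (inv a) a).
  { intro a. rewrite Am. rewrite (proj2 (Hinv a)). reflexivity. }
  assert (Lr : forall a r, mul a (mul (inv a) (mul a r)) = mul a r).
  { intros a r. rewrite (Am (inv a) a r), (Am a _ r), (Am a (inv a) a), (proj1 (Hinv a)). reflexivity. }
  assert (Lr' : forall a r, mul (inv a) (mul a (mul (inv a) r)) = mul (inv a) r).
  { intros a r. rewrite (Am a (inv a) r), (Am (inv a) _ r), (Am (inv a) a (inv a)), (proj2 (Hinv a)). reflexivity. }
  assert (Lt : forall a, mul a (mul (inv a) a) = a).
  { intros a. rewrite (Am a (inv a) a), (proj1 (Hinv a)). reflexivity. }
  assert (Lt' : forall a, mul (inv a) (mul a (inv a)) = inv a).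
  { intros a. rewrite (Am (inv a) a (inv a)), (proj2 (Hinv a)). reflexivity. }
  assert (invM : forall a b, inv (mul a b) = mul (inv b) (inv a)).
  { intros a b. symmetry. apply Huniq.
    - transitivity (mul (mul a (mul (mul b (inv b)) (mul (inv a) a))) b).
      + repeat rewrite <- Am. reflexivity.
      + rewrite (idcomm (mul b (inv b)) (mul (inv a) a) (idl b) (idr a)).
        repeat rewrite <- Am. rewrite Lt, Lr. reflexivity.
    - transitivity (mul (mul (inv b) (mul (mul (inv a) a) (mul b (inv b)))) (inv a)).
      + repeat rewrite <- Am. reflexivity.
      + rewrite (idcomm (mul (inv a) a) (mul b (inv b)) (idr a) (idl b)).
        repeat rewrite <- Am. rewrite Lt', Lr'. reflexivity. }
  intros [[x y] z]. unfold r12, r23, r_S. simpl.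
  pose proof (H2 x y z) as K2. pose proof (H3 x y z) as K3.
  pose proof (H1 (inv x) y (add (inv y) z)) as K1.
  unfold lam, rho in *.
  set (g := add (inv x) y) in *.
  set (w := mul y (add (inv y) z)) in *.
  set (j := add (inv x) w) in *.
  assert (KM : add (inv (mul x g)) (mul (mul (inv g) y) (add (inv (mul (inv g) y)) z))
              = mul (inv g) j).
  { rewrite K2. unfold j. rewrite (Hd (inv g) (inv x) w), invM. reflexivity. }
  assert (Kj : forall r, mul (inv j) (mul g (mul (inv g) r)) = mul (inv j) r).
  { intro r. assert (E : inv j = mul (inv j) (mul g (inv g))).
    { rewrite <- K1 at 1. rewrite invM, (invid _ (idl g)). reflexivity. }
    rewrite E at 2. repeat rewrite <- Am. reflexivity. }
  rewrite KM. f_equal; [f_equal|].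
  - rewrite <- Am. rewrite (Am g (inv g) j), K1. reflexivity.
  - rewrite invM, invinv, K3. unfold w. repeat rewrite <- Am. rewrite Kj. reflexivity.
  - rewrite K3, invM. rewrite <- Am. reflexivity.
Qed.
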